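(* Let $\rho$ be a state of $A$, $\sigma$ a state of $B$, $\eta$ a state of $R$, $d=d_R$, and $\Lambda_p(\eta):=p\eta+(1-p)\mathbb{1}/d$. For every $p\in(0,1]$: $\Delta H_\eta\ge0$ if and only if $\Delta H_{\Lambda_p(\eta)}\ge0$.
   Context: $G$ is a compact group with normalized Haar measure $dg$; finite-dimensional systems $A,B$ carry continuous unitary representations $U_A,U_B$; the reference $R$ has $d_R=d_B$ and carries $U_R(g)=\overline{U_B(g)}$. The $G$-twirl on $RX$ ($X=A,B$) is $\mathcal{G}(M)=\int dg\,(U_R(g)\otimes U_X(g))M(U_R(g)\otimes U_X(g))^\dagger$. $H_{\min}(R|X)_\Omega=-\log_2\inf_{Y\ge0}\{\mathrm{tr}[Y]:\mathbb{1}_R\otimes Y\ge\Omega_{RX}\}$; $H_\eta(\tau):=H_{\min}(R|X)_{\mathcal{G}(\eta\otimes\tau)}$; $\Delta H_\eta:=H_\eta(\sigma)-H_\eta(\rho)$. *)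

(* Defs.v *)
From HB Require Import structures.
From mathcomp Require Import all_boot all_order all_algebra.
From mathcomp Require Import all_classical all_reals all_analysis.
From mathcomp Require Import complex mxtens.

Set Implicit Arguments.
Unset Strict Implicit.
Unset Printing Implicit Defensive.

Import Order.TTheory GRing.Theory Num.Theory.
Import numFieldNormedType.Exports.
Local Open Scope classical_set_scope.
Local Open Scope ring_scope.

Section Defs.
Variable R : realType.
Local Notation C := (R[i]).

Definition adj {m n : nat} (M : 'M[C]_(m, n)) : 'M[C]_(n, m) :=
  (map_mx (@conjc R) M)^T.

(* positive semidefinite: <u, M u> >= 0 for every u (in the order of C,
   which forces the value to be real) *)
Definition psd {n : nat} (M : 'M[C]_n) : Prop :=
  forall u : 'cV[C]_n, 0 <= (adj u *m M *m u) 0 0.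

Definition loewner_le {n : nat} (A B : 'M[C]_n) : Prop := psd (B - A).

Definition state {n : nat} (M : 'M[C]_n) : Prop := psd M /\ \tr M = 1.

Definition unitary {n : nat} (U : 'M[C]_n) : Prop := U *m adj U = 1%:M.

End Defs.

Definition compact_group (G : ptopologicalType)
  (mul : G -> G -> G) (inv : G -> G) (e : G) : Prop :=
  [/\ (forall x y z, mul x (mul y z) = mul (mul x y) z),
      (forall x, mul e x = x /\ mul (inv x) x = e),
      (continuous (fun p : G * G => mul p.1 p.2) /\ continuous inv),
      compact [set: G] & hausdorff_space G].

Notation Borel G := (g_sigma_algebraType (@open G)).

(* normalized Haar measure: a Borel probability measure which is left- (and,
   G being compact, also right-) invariant *)
Definition haar (R : realType) (G : ptopologicalType) (mul : G -> G -> G)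
  (mu : probability (Borel G) R) : Prop :=
  forall (g : G) (A : set (Borel G)), measurable A ->
    mu [set mul g x | x in A] = mu A /\ mu [set mul x g | x in A] = mu A.

Definition unitary_rep (R : realType) (G : ptopologicalType)
  (mul : G -> G -> G) (n : nat) (U : G -> 'M[R[i]]_n) : Prop :=
  [/\ (forall g, unitary (U g)),
      (forall g h, U (mul g h) = U g *m U h) &
      (forall i j, continuous (fun g => complex.Re (U g i j)) /\
                   continuous (fun g => complex.Im (U g i j)))].

Section Twirl.
Variables (R : realType) (G : ptopologicalType) (mu : probability (Borel G) R).
Local Notation C := (R[i]).

Definition cint (f : G -> C) : C :=
  Complex (Rintegral mu setT (fun g => complex.Re (f g)))
          (Rintegral mu setT (fun g => complex.Im (f g))).

Definition mxint {m n : nat} (F : G -> 'M[C]_(m, n)) : 'M[C]_(m, n) :=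
  \matrix_(i, j) cint (fun g => F g i j).

Definition twirl {dR dX : nat} (UR : G -> 'M[C]_dR) (UX : G -> 'M[C]_dX)
  (M : 'M[C]_(dR * dX)) : 'M[C]_(dR * dX) :=
  mxint (fun g => (UR g *t UX g) *m M *m adj (UR g *t UX g)).

End Twirl.

Definition Hmin (R : realType) (dR dX : nat) (Om : 'M[R[i]]_(dR * dX)) : R :=
  - (ln (inf [set complex.Re (\tr Y) | Y in
        [set Y : 'M[R[i]]_dX | psd Y /\ loewner_le Om ((1%:M : 'M[R[i]]_dR) *t Y)]])
     / ln 2).

(* H_eta(tau) for tau on X, with U_R = conj U_B *)
Definition Heta (R : realType) (G : ptopologicalType) (mu : probability (Borel G) R)
  (dB dX : nat) (UB : G -> 'M[R[i]]_dB) (UX : G -> 'M[R[i]]_dX)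
  (eta : 'M[R[i]]_dB) (tau : 'M[R[i]]_dX) : R :=
  @Hmin R dB dX (twirl mu (fun g => map_mx (@conjc R) (UB g)) UX (eta *t tau)).

Definition DeltaH (R : realType) (G : ptopologicalType) (mu : probability (Borel G) R)
  (dA dB : nat) (UA : G -> 'M[R[i]]_dA) (UB : G -> 'M[R[i]]_dB)
  (eta : 'M[R[i]]_dB) (rho : 'M[R[i]]_dA) (sigma : 'M[R[i]]_dB) : R :=
  Heta mu UB UB eta sigma - Heta mu UB UA eta rho.

Definition Lambda (R : realType) (d : nat) (p : R) (eta : 'M[R[i]]_d) : 'M[R[i]]_d :=
  (p%:C)%C *: eta + (((1 - p) / d%:R)%:C)%C *: 1%:M.

(* Main.v *)
Require Import Defs.
From HB Require Import structures.
From mathcomp Require Import all_boot all_order all_algebra.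
From mathcomp Require Import all_classical all_reals all_analysis.
From mathcomp Require Import complex mxtens.
From mathcomp Require Import ring lra.
Set Implicit Arguments.
Unset Strict Implicit.
Unset Printing Implicit Defensive.
Import Order.TTheory GRing.Theory Num.Theory.
Import numFieldNormedType.Exports.
Local Open Scope classical_set_scope.
Local Open Scope ring_scope.
Section Cx.
Variable R : realType.
Local Notation C := R[i].
Lemma ReD (x y : C) : complex.Re (x + y) = complex.Re x + complex.Re y. Proof. by case: x; case: y. Qed.
Lemma ImD (x y : C) : complex.Im (x + y) = complex.Im x + complex.Im y. Proof. by case: x; case: y. Qed.
Lemma ReM (x y : C) : complex.Re (x * y) = complex.Re x * complex.Re y - complex.Im x * complex.Im y.
Proof. by case: x; case: y. Qed.
Lemma ImM (x y : C) : complex.Im (x * y) = complex.Re x * complex.Im y + complex.Im x * complex.Re y.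
Proof. by case: x => a b; case: y => c d /=. Qed.
Lemma Re0 : complex.Re (0 : C) = 0. Proof. by []. Qed.
Lemma Im0 : complex.Im (0 : C) = 0. Proof. by []. Qed.
Lemma Re_sum (I : Type) (r : seq I) (P : pred I) (F : I -> C) :
  complex.Re (\sum_(i <- r | P i) F i) = \sum_(i <- r | P i) complex.Re (F i).
Proof. exact: (big_morph _ ReD Re0). Qed.
Lemma Im_sum (I : Type) (r : seq I) (P : pred I) (F : I -> C) :
  complex.Im (\sum_(i <- r | P i) F i) = \sum_(i <- r | P i) complex.Im (F i).
Proof. exact: (big_morph _ ImD Im0). Qed.
End Cx.

Section Nice.
Variables (R : realType) (G : ptopologicalType) (mu : probability (Borel G) R).
Local Notation C := R[i].

Definition bm (h : G -> R) :=
  measurable_fun (setT : set (Borel G)) h /\ exists2 M : R, 0 <= M & forall g, `|h g| <= M.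

Lemma bm_cst (c : R) : bm (fun _ => c).
Proof. split; first exact: measurable_cst. by exists `|c|. Qed.

Lemma bmD h1 h2 : bm h1 -> bm h2 -> bm (fun g => h1 g + h2 g).
Proof.
move=> [m1 [M1 M10 b1]] [m2 [M2 M20 b2]]; split; first exact: measurable_realfun.measurable_funD.
exists (M1 + M2); first by rewrite addr_ge0.
by move=> g; rewrite (le_trans (ler_normD _ _))// lerD.
Qed.

Lemma bmN h : bm h -> bm (fun g => - h g).
Proof.
move=> [m1 [M1 M10 b1]]; split; first exact: measurable_realfun.measurable_funN.
by exists M1 => // g; rewrite normrN.
Qed.

Lemma bmM h1 h2 : bm h1 -> bm h2 -> bm (fun g => h1 g * h2 g).
Proof.
move=> [m1 [M1 M10 b1]] [m2 [M2 M20 b2]]; split; first exact: measurable_realfun.measurable_funM.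
exists (M1 * M2); first by rewrite mulr_ge0.
by move=> g; rewrite normrM ler_pM.
Qed.

Lemma bm_int h : bm h -> mu.-integrable setT (EFin \o h).
Proof.
move=> [mh [M M0 b]]; apply/integrableP; split; first exact/measurable_realfun.measurable_EFinP.
apply: (le_lt_trans (integral_le_bound M%:E _ _ _ _)) => //.
- exact/measurable_realfun.measurable_EFinP.
- by apply: aeW => g _ /=; rewrite lee_fin b.
set m := (X in (_ * X < _)%E).
have -> : m = 1%E by exact: probability_setT.
by rewrite mule1 ltry.
Qed.

Definition nice (f : G -> C) := bm (fun g => complex.Re (f g)) /\ bm (fun g => complex.Im (f g)).

Lemma nice_ext f h : (forall g, f g = h g) -> nice f -> nice h.
Proof. by move=> e; have -> : h = f by apply: funext => g; rewrite e. Qed.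

Lemma nice_cst c : nice (fun _ => c).
Proof. by split; apply: bm_cst. Qed.

Lemma niceD f h : nice f -> nice h -> nice (fun g => f g + h g).
Proof.
move=> [f1 f2] [h1 h2]; split.
  by under eq_fun do rewrite ReD; apply: bmD.
by under eq_fun do rewrite ImD; apply: bmD.
Qed.

Lemma niceM f h : nice f -> nice h -> nice (fun g => f g * h g).
Proof.
move=> [f1 f2] [h1 h2]; split.
  by under eq_fun do rewrite ReM; apply: bmD; [apply: bmM|apply/bmN/bmM].
by under eq_fun do rewrite ImM; apply: bmD; apply: bmM.
Qed.

Lemma nice_conj f : nice f -> nice (fun g => conjc (f g)).
Proof.
move=> [f1 f2]; split.
  by apply: (eq_ind _ _ f1); apply: funext => g; case: (f g).
by apply: (eq_ind _ _ (bmN f2)); apply: funext => g; case: (f g).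
Qed.

Lemma nice_sum (I : Type) (r : seq I) (P : pred I) (F : I -> G -> C) :
  (forall i, nice (F i)) -> nice (fun g => \sum_(i <- r | P i) F i g).
Proof.
move=> nF; elim: r => [|a r IH].
  by apply: (nice_ext _ (nice_cst 0)) => g; rewrite big_nil.
case Pa: (P a).
  by apply: (nice_ext _ (niceD (nF a) IH)) => g; rewrite big_cons Pa.
by apply: (nice_ext _ IH) => g; rewrite big_cons Pa.
Qed.

Lemma cint_ext f h : (forall g, f g = h g) -> cint mu f = cint mu h.
Proof. by move=> e; have -> : h = f by apply: funext => g; rewrite e. Qed.

Lemma cintD f h : nice f -> nice h ->
  cint mu (fun g => f g + h g) = cint mu f + cint mu h.
Proof.
move=> [f1 f2] [h1 h2]; rewrite /cint.
under eq_Rintegral do rewrite ReD.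
under [X in Complex _ X]eq_Rintegral do rewrite ImD.
by rewrite !RintegralD //; apply: bm_int.
Qed.

Lemma Rint_cst (c : R) : Rintegral mu setT (fun _ => c) = c.
Proof. rewrite Rintegral_cst //; set m := (X in fine X).
have -> : m = 1%E by exact: probability_setT.
by rewrite mulr1. Qed.

Lemma cint_cst c : cint mu (fun _ => c) = c.
Proof. by rewrite /cint !Rint_cst; case: c. Qed.

Lemma cintZ (c : C) f : nice f -> cint mu (fun g => c * f g) = c * cint mu f.
Proof.
move=> [f1 f2]; rewrite /cint.
under eq_Rintegral do rewrite ReM.
under [X in Complex _ X]eq_Rintegral do rewrite ImM.
rewrite !RintegralB ?RintegralD ?RintegralZl //; try by apply: bm_int.
- by case: c.
- by apply: bm_int; apply: bmM => //; apply: bm_cst.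
- by apply: bm_int; apply: bmM => //; apply: bm_cst.
- by apply: bm_int; apply: bmM => //; apply: bm_cst.
- by apply: bm_int; apply: bmM => //; apply: bm_cst.
Qed.

Lemma cint_ge0 f : (forall g, 0 <= f g) -> 0 <= cint mu f.
Proof.
move=> f0; rewrite /cint.
have -> : Rintegral mu setT (fun g => complex.Im (f g)) = 0.
  rewrite -[RHS](Rint_cst 0); apply: eq_Rintegral => g _.
  by have := f0 g; rewrite lecE => /andP[/eqP -> _].
rewrite lecE /= eqxx /=; apply: Rintegral_ge0 => g _.
by have := f0 g; rewrite lecE => /andP[_].
Qed.

Lemma cint_sum (I : Type) (r : seq I) (P : pred I) (F : I -> G -> C) :
  (forall i, nice (F i)) ->
  cint mu (fun g => \sum_(i <- r | P i) F i g) = \sum_(i <- r | P i) cint mu (F i).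
Proof.
move=> nF; elim: r => [|a r IH].
  by rewrite big_nil (cint_ext (fun g => big_nil _ _ _ _)) cint_cst.
case Pa: (P a); rewrite big_cons Pa.
  rewrite (@cint_ext _ (fun g => F a g + \sum_(i <- r | P i) F i g)).
    by rewrite cintD ?IH //; apply: nice_sum.
  by move=> g; rewrite big_cons Pa.
by rewrite -IH; apply: cint_ext => g; rewrite big_cons Pa.
Qed.
End Nice.

Section Mx.
Variable R : realType.
Local Notation C := R[i].

Lemma adj_mul m n p (A : 'M[C]_(m,n)) (B : 'M[C]_(n,p)) : adj (A *m B) = adj B *m adj A.
Proof. by rewrite /adj map_mxM trmx_mul. Qed.
Lemma adj_tens m n p q (A : 'M[C]_(m,n)) (B : 'M[C]_(p,q)) : adj (A *t B) = adj A *t adj B.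
Proof. by rewrite /adj map_mxT trmx_tens. Qed.
Lemma adjK m n (A : 'M[C]_(m,n)) : adj (adj A) = A.
Proof. by apply/matrixP => i j; rewrite !mxE conjcK. Qed.
Lemma adj1 n : adj (1%:M : 'M[C]_n) = 1%:M.
Proof. by rewrite /adj map_mx1 trmx1. Qed.
Lemma adjD m n (A B : 'M[C]_(m,n)) : adj (A + B) = adj A + adj B.
Proof. by apply/matrixP => i j; rewrite !mxE rmorphD. Qed.
Lemma adjZr m n (a : R) (A : 'M[C]_(m,n)) : adj ((a%:C)%C *: A) = (a%:C)%C *: adj A.
Proof. by apply/matrixP => i j; rewrite !mxE rmorphM; congr (_ * _); rewrite /= oppr0. Qed.
Lemma adj_delta n (i : 'I_n) : adj (delta_mx i 0 : 'cV[C]_n) = delta_mx 0 i.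
Proof. by apply/matrixP => a b; rewrite !mxE conjc_nat andbC. Qed.

Lemma psdD n (A B : 'M[C]_n) : psd A -> psd B -> psd (A + B).
Proof. by move=> hA hB u; rewrite mulmxDr mulmxDl mxE addr_ge0. Qed.

Lemma psdZ n (a : R) (A : 'M[C]_n) : 0 <= a -> psd A -> psd ((a%:C)%C *: A).
Proof.
move=> a0 hA u; rewrite -scalemxAr -scalemxAl mxE mulr_ge0 //.
by rewrite ler0c.
Qed.

Lemma psd_conj n m (W : 'M[C]_(n,m)) (A : 'M[C]_m) : psd A -> psd (W *m A *m adj W).
Proof. by move=> hA u; have := hA (adj W *m u); rewrite adj_mul adjK !mulmxA. Qed.

Lemma psd_diag n (A : 'M[C]_n) i : psd A -> 0 <= A i i.
Proof.
move=> hA; have := hA (delta_mx i 0); rewrite adj_delta -rowE -colE.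
by rewrite !mxE.
Qed.

Lemma psd_tr n (A : 'M[C]_n) : psd A -> 0 <= \tr A.
Proof. by move=> hA; apply: sumr_ge0 => i _; apply: psd_diag. Qed.

Lemma mxtens_index_inj m n : injective (@mxtens_index m n).
Proof. exact: can_inj (@mxtens_indexK m n). Qed.

Lemma tens11 m n : (1%:M : 'M[C]_m) *t (1%:M : 'M[C]_n) = 1%:M.
Proof.
apply/matrixP => i j; case: (mxtens_indexP i) => i1 i2; case: (mxtens_indexP j) => j1 j2.
rewrite tensmxE !mxE (inj_eq (@mxtens_index_inj m n)) xpair_eqE.
by case: (i1 == j1); case: (i2 == j2); rewrite ?mulr1 ?mulr0 ?mul0r.
Qed.

Lemma tensDl m n p q (A B : 'M[C]_(m,n)) (M : 'M[C]_(p,q)) : (A + B) *t M = A *t M + B *t M.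
Proof. by apply/matrixP => i j; rewrite !mxE mulrDl. Qed.
Lemma tensZl m n p q a (A : 'M[C]_(m,n)) (M : 'M[C]_(p,q)) : (a *: A) *t M = a *: (A *t M).
Proof. by apply/matrixP => i j; rewrite !mxE mulrA. Qed.
Lemma tensZr m n p q a (A : 'M[C]_(m,n)) (M : 'M[C]_(p,q)) : A *t (a *: M) = a *: (A *t M).
Proof. by apply/matrixP => i j; rewrite !mxE mulrCA. Qed.

Lemma tr_tens m n (A : 'M[C]_m) (B : 'M[C]_n) : \tr (A *t B) = \tr A * \tr B.
Proof. by rewrite /mxtrace mxtens.mulr_sum; apply: eq_bigr => i _; rewrite mxE. Qed.

Lemma psd_tens1 m n (Y : 'M[C]_n) : (0 < m)%N -> psd ((1%:M : 'M[C]_m) *t Y) -> psd Y.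
Proof.
move=> m0 h v; pose i0 := Ordinal m0; pose e : 'cV[C]_m := delta_mx i0 0.
pose X : 'M[C]_(1 * 1, 1 * 1) := adj (e *t v) *m (1%:M *t Y) *m (e *t v).
have : 0 <= X 0 0 := h (e *t v).
rewrite /X adj_tens !tensmx_mul mulmx1 /e adj_delta mul_delta_mx.
have E : forall (i j : 'I_1) (Z : 'M[C]_1), Z i j = Z 0 0 by move=> i j Z; rewrite !ord1.
rewrite mxE (E _ _ (delta_mx _ _)) (E _ _ (adj v *m Y *m v)) mxE /=.
by rewrite mul1r.
Qed.

Lemma Nexp n (u : 'cV[C]_n) : (adj u *m u) 0 0 = \sum_i `|u i 0| ^+ 2.
Proof. by rewrite mxE; apply: eq_bigr => i _; rewrite !mxE normCK mulrC. Qed.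

Lemma N_ge0 n (u : 'cV[C]_n) : 0 <= (adj u *m u) 0 0.
Proof. by rewrite Nexp; apply: sumr_ge0 => i _; rewrite exprn_ge0. Qed.

Lemma psd_scalar n (K : C) : 0 <= K -> psd (K%:M : 'M[C]_n).
Proof. by move=> K0 u; rewrite mul_mx_scalar -scalemxAl mxE mulr_ge0 // N_ge0. Qed.

Lemma prod_bound (a b N : C) : 0 <= a -> 0 <= b -> a ^+ 2 <= N -> b ^+ 2 <= N -> a * b <= N *+ 2.
Proof.
move=> a0 b0 aN bN; have N0 : 0 <= N by apply: le_trans aN; rewrite exprn_ge0.
have N2 : N <= N *+ 2 by rewrite mulr2n lerDl.
case/orP: (real_leVge (ger0_real a0) (ger0_real b0)) => hab.
  by apply: le_trans N2; apply: le_trans bN; rewrite expr2 ler_wpM2r.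
by apply: le_trans N2; apply: le_trans aN; rewrite expr2 ler_wpM2l.
Qed.

Lemma psd_bound n (M : 'M[C]_n) : psd M -> exists K : C, 0 <= K /\ psd (K%:M - M).
Proof.
move=> hM; exists ((\sum_j \sum_i `|M i j|) *+ 2); split.
  by rewrite mulrn_wge0 // sumr_ge0 // => j _; rewrite sumr_ge0.
move=> u; set K := (_ *+ 2).
have oE : forall (A : 'M[C]_(1,1)), (- A) 0 0 = - A 0 0 by move=> A; rewrite mxE.
have sE : forall (c : C) (A : 'M[C]_(1,1)), (c *: A) 0 0 = c * A 0 0 by move=> c A; rewrite mxE.
rewrite mulmxBr mulmxBl mxE mul_mx_scalar -scalemxAl oE sE subr_ge0.
set N := (adj u *m u) 0 0; set x := (_ *m _ *m _) 0 0.
have x0 : 0 <= x := hM u.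
have uN : forall i, `|u i 0| ^+ 2 <= N.
  move=> i; rewrite /N Nexp (bigD1 i) //= lerDl sumr_ge0 // => k _.
rewrite -(ger0_norm x0) /x mxE.
apply: (le_trans (ler_norm_sum _ _ _)).
rewrite /K mulrnAl -mulrnAr mulr_suml; apply: ler_sum => j _.
rewrite mulr_suml normrM mxE.
apply: (le_trans (ler_wpM2r (normr_ge0 _) (ler_norm_sum _ _ _))).
rewrite mulr_suml; apply: ler_sum => i _.
rewrite normrM !mxE norm_conjC (mulrC `|u i 0|) -mulrA; apply: ler_wpM2l => //.
by apply: prod_bound.
Qed.

Lemma adjZ m n (c : C) (A : 'M[C]_(m,n)) : adj (c *: A) = conjc c *: adj A.
Proof. by apply/matrixP => i j; rewrite !mxE rmorphM. Qed.

Definition fq n (A : 'M[C]_n) (x y : 'cV[C]_n) := (adj x *m A *m y) 0 0.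

Lemma fq_add n (A : 'M[C]_n) x y :
  fq A (x + y) (x + y) = fq A x x + fq A x y + fq A y x + fq A y y.
Proof.
rewrite /fq adjD !mulmxDl !mulmxDr.
have E : forall (X Y : 'M[C]_1), (X + Y) 0 0 = X 0 0 + Y 0 0 by move=> X Y; rewrite mxE.
rewrite !E; ring.
Qed.

Lemma fq_delta n (A : 'M[C]_n) (c1 c2 : C) a b :
  fq A (c1 *: delta_mx a 0) (c2 *: delta_mx b 0) = conjc c1 * c2 * A a b.
Proof.
rewrite /fq adjZ -scalemxAl -scalemxAr -scalemxAl adj_delta -rowE -colE !mxE.
by rewrite mulrCA mulrA.
Qed.

Lemma psd_herm n (A : 'M[C]_n) : psd A -> forall i j, A j i = conjc (A i j).
Proof.
move=> hA i j.
have q : forall x : 'cV_n, complex.Im (fq A x x) = 0 by move=> x; apply: ger0_Im; apply: hA.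
have ed : forall k, (delta_mx k 0 : 'cV[C]_n) = 1 *: delta_mx k 0 by move=> k; rewrite scale1r.
have qk : forall k, complex.Im (A k k) = 0.
  by move=> k; have := q (delta_mx k 0); rewrite ed fq_delta conjc1 !mul1r.
have h1 := q (1 *: delta_mx i 0 + 1 *: delta_mx j 0).
have h2 := q (1 *: delta_mx i 0 + 'i%C *: delta_mx j 0).
have qi := qk i; have qj := qk j.
rewrite fq_add !fq_delta !ImD !ImM /= in h1.
rewrite fq_add !fq_delta !ImD !ImM /= in h2.
move: h1 h2 qi qj; case: (A i j) => a b; case: (A j i) => c d.
case: (A i i) => a1 b1; case: (A j j) => a2 b2 /= h1 h2 qi qj.
apply/eqP; rewrite eq_complex /=; apply/andP; split; apply/eqP.
  by lra.
by lra.
Qed.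

Lemma psd_spectral n (A : 'M[C]_n) : psd A ->
  exists (P : 'M[C]_n) (d : 'rV[C]_n), A = adj P *m diag_mx d *m P /\ forall k, 0 <= d 0 k.
Proof.
move=> hA.
have Ah : A \is hermsymmx.
  rewrite is_hermitianmxE expr0 scale1r; apply/eqP/matrixP => i j.
  by rewrite !mxE (psd_herm hA j i).
have /orthomx_spectralP eA := hermitian_normalmx Ah.
have uP := spectral_unitarymx A.
have aP : adj (spectralmx A) = map_mx Num.conj_op (spectralmx A)^T by rewrite /adj map_trmx.
rewrite invmx_unitary // -aP in eA.
exists (spectralmx A), (spectral_diag A); split => //.
have PP : spectralmx A *m adj (spectralmx A) = 1%:M by rewrite aP; apply/unitarymxP.
have hD : psd (diag_mx (spectral_diag A)).
  have := psd_conj (spectralmx A) hA; rewrite {2}eA !mulmxA PP mul1mx -mulmxA PP mulmx1.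
  by [].
by move=> k; have := psd_diag k hD; rewrite mxE eqxx mulr1n.
Qed.

Lemma psd_diagmx n (d : 'rV[C]_n) : (forall k, 0 <= d 0 k) -> psd (diag_mx d).
Proof.
move=> d0 u; rewrite mul_mx_diag mxE; apply: sumr_ge0 => j _.
rewrite !mxE mulrAC mulrC mulr_ge0 //.
by rewrite mulrC; apply: mulcJ_ge0.
Qed.

Lemma tens_diag m n (d1 : 'rV[C]_m) (d2 : 'rV[C]_n) :
  diag_mx d1 *t diag_mx d2 =
  diag_mx (\row_k (d1 0 (mxtens_unindex k).1 * d2 0 (mxtens_unindex k).2)).
Proof.
apply/matrixP => a b; case: (mxtens_indexP a) => i k; case: (mxtens_indexP b) => j l.
rewrite tensmxE !mxE mxtens_indexK (inj_eq (@mxtens_index_inj m n)) xpair_eqE /=.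
by case: (i == j); case: (k == l); rewrite ?mulr1n ?mulr0n ?mul0r ?mulr0.
Qed.

Lemma psd_tens m n (A : 'M[C]_m) (B : 'M[C]_n) : psd A -> psd B -> psd (A *t B).
Proof.
move=> /psd_spectral [P [d [eA d0]]] /psd_spectral [Q [e [eB e0]]].
rewrite eA eB.
have -> : (adj P *m diag_mx d *m P) *t (adj Q *m diag_mx e *m Q) =
  (adj P *t adj Q) *m (diag_mx d *t diag_mx e) *m adj (adj P *t adj Q).
  by rewrite adj_tens !adjK !tensmx_mul.
apply: psd_conj; rewrite tens_diag; apply: psd_diagmx => k.
by rewrite mxE mulr_ge0.
Qed.
End Mx.



Section Tw.
Variables (R : realType) (G : ptopologicalType) (mu : probability (Borel G) R).
Local Notation C := R[i].

Definition nicemx m n (F : G -> 'M[C]_(m,n)) := forall i j, nice (fun g => F g i j).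

Lemma nicemx_cst m n (M : 'M[C]_(m,n)) : nicemx (fun _ => M).
Proof. by move=> i j; apply: nice_cst. Qed.

Lemma nicemx_mul m n p (F : G -> 'M[C]_(m,n)) (H : G -> 'M[C]_(n,p)) :
  nicemx F -> nicemx H -> nicemx (fun g => F g *m H g).
Proof.
move=> nF nH i j; apply: (@nice_ext _ _ (fun g => \sum_k F g i k * H g k j)).
  by move=> g; rewrite mxE.
by apply: nice_sum => k; apply: niceM.
Qed.

Lemma nicemx_adj m n (F : G -> 'M[C]_(m,n)) : nicemx F -> nicemx (fun g => adj (F g)).
Proof.
move=> nF i j; apply: (@nice_ext _ _ (fun g => conjc (F g j i))).
  by move=> g; rewrite !mxE.
exact: nice_conj.
Qed.

Lemma nicemx_conj m n (F : G -> 'M[C]_(m,n)) : nicemx F -> nicemx (fun g => map_mx conjc (F g)).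
Proof.
move=> nF i j; apply: (@nice_ext _ _ (fun g => conjc (F g i j))).
  by move=> g; rewrite !mxE.
exact: nice_conj.
Qed.

Lemma nicemx_tens m n p q (F : G -> 'M[C]_(m,n)) (H : G -> 'M[C]_(p,q)) :
  nicemx F -> nicemx H -> nicemx (fun g => F g *t H g).
Proof.
move=> nF nH i j; apply: (@nice_ext _ _ (fun g => F g (mxtens_unindex i).1 (mxtens_unindex j).1 *
   H g (mxtens_unindex i).2 (mxtens_unindex j).2)).
  by move=> g; rewrite mxE.
exact: niceM.
Qed.

Lemma cont_meas (h : G -> R) : continuous h -> measurable_fun (setT : set (Borel G)) h.
Proof.
move=> ch; apply: (measurability _ (measurable_realfun.RGenOpens.measurableE R)) => _ [_ [a [b ->]] <-].
rewrite setTI; apply: sub_sigma_algebra.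
by move/continuousP : ch; apply; exact: interval_open.
Qed.

Lemma unitary_bound n (U : 'M[C]_n) : unitary U ->
  forall i j, `|complex.Re (U i j)| <= 1 /\ `|complex.Im (U i j)| <= 1.
Proof.
move=> hU i j.
have e := congr1 (fun M : 'M[C]_n => complex.Re (M i i)) hU; simpl in e.
rewrite !mxE eqxx mulr1n Re_sum /= in e.
have t : forall k, complex.Re (U i k * adj U k i) = complex.Re (U i k) ^+ 2 + complex.Im (U i k) ^+ 2.
  by move=> k; rewrite !mxE; case: (U i k) => x y /=; rewrite !expr2; lra.
have e2 : \sum_k (complex.Re (U i k) ^+ 2 + complex.Im (U i k) ^+ 2) = 1.
  by rewrite -e; apply: eq_bigr => k _; rewrite t.
have s : complex.Re (U i j) ^+ 2 + complex.Im (U i j) ^+ 2 <= 1.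
  rewrite -e2 (bigD1 j) //= lerDl; apply: sumr_ge0 => k _.
  by rewrite addr_ge0 // sqr_ge0.
move: s; set x := complex.Re _; set y := complex.Im _ => s.
by rewrite !ler_norml; split; apply/andP; split; nra.
Qed.

Lemma rep_nice (mul : G -> G -> G) n (U : G -> 'M[C]_n) : unitary_rep mul U -> nicemx U.
Proof.
case=> hu _ hc i j; split; split.
- exact: cont_meas (hc i j).1.
- by exists 1 => // g; case: (unitary_bound (hu g) i j).
- exact: cont_meas (hc i j).2.
- by exists 1 => // g; case: (unitary_bound (hu g) i j).
Qed.

Lemma mulmx_entry m n (a : 'M[C]_(1,m)) (M : 'M[C]_(m,n)) (b : 'M[C]_(n,1)) :
  (a *m M *m b) 0 0 = \sum_j \sum_i a 0 i * M i j * b j 0.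
Proof. by rewrite mxE; apply: eq_bigr => j _; rewrite mxE mulr_suml. Qed.

Lemma mxint_form m n (a : 'M[C]_(1,m)) (F : G -> 'M[C]_(m,n)) (b : 'M[C]_(n,1)) :
  nicemx F -> (a *m mxint mu F *m b) 0 0 = cint mu (fun g => (a *m F g *m b) 0 0).
Proof.
move=> nF; rewrite mulmx_entry (cint_ext _ (fun g => mulmx_entry a (F g) b)).
rewrite cint_sum; last first.
  by move=> j; apply: nice_sum => i; apply: niceM; [apply: niceM; [apply: nice_cst|]|apply: nice_cst].
apply: eq_bigr => j _; rewrite cint_sum; last first.
  by move=> i; apply: niceM; [apply: niceM; [apply: nice_cst|]|apply: nice_cst].
apply: eq_bigr => i _; rewrite mxE.
rewrite (cint_ext _ (fun g => mulrC _ (b j 0))) cintZ; last first.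
  by apply: niceM; [apply: nice_cst|].
by rewrite cintZ // mulrC.
Qed.

Lemma mxint_psd n (F : G -> 'M[C]_n) : nicemx F -> (forall g, psd (F g)) -> psd (mxint mu F).
Proof. by move=> nF pF u; rewrite mxint_form //; apply: cint_ge0 => g; apply: pF. Qed.

Lemma mxint_tr n (F : G -> 'M[C]_n) : nicemx F -> \tr (mxint mu F) = cint mu (fun g => \tr (F g)).
Proof.
move=> nF; rewrite /mxtrace cint_sum //.
by apply: eq_bigr => i _; rewrite mxE.
Qed.

Lemma mxint_ext m n (F H : G -> 'M[C]_(m,n)) : (forall g, F g = H g) -> mxint mu F = mxint mu H.
Proof. by move=> e; have -> : H = F by apply: funext => g; rewrite e. Qed.

Lemma mxintD m n (F H : G -> 'M[C]_(m,n)) : nicemx F -> nicemx H ->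
  mxint mu (fun g => F g + H g) = mxint mu F + mxint mu H.
Proof.
move=> nF nH; apply/matrixP => i j; rewrite !mxE -cintD //.
by apply: cint_ext => g; rewrite mxE.
Qed.

Lemma mxintZ m n (c : C) (F : G -> 'M[C]_(m,n)) : nicemx F ->
  mxint mu (fun g => c *: F g) = c *: mxint mu F.
Proof.
move=> nF; apply/matrixP => i j; rewrite !mxE -cintZ //.
by apply: cint_ext => g; rewrite mxE.
Qed.

Lemma mxint_tens1 m n (K : G -> 'M[C]_n) : nicemx K ->
  mxint mu (fun g => (1%:M : 'M[C]_m) *t K g) = 1%:M *t mxint mu K.
Proof.
move=> nK; apply/matrixP => a b.
case: (mxtens_indexP a) => i k; case: (mxtens_indexP b) => j l.
rewrite tensmxE !mxE -cintZ //.
by apply: cint_ext => g; rewrite tensmxE mxE.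
Qed.
End Tw.

Section Tw2.
Variables (R : realType) (G : ptopologicalType) (mu : probability (Borel G) R).
Variable (mul : G -> G -> G).
Local Notation C := R[i].

Lemma conj_unitary n (A : 'M[C]_n) : unitary A -> unitary (map_mx conjc A).
Proof.
rewrite /unitary => h.
have : map_mx conjc (A *m adj A) = map_mx conjc 1%:M by rewrite h.
rewrite map_mxM map_mx1 => <-; congr (_ *m _).
by apply/matrixP => i j; rewrite !mxE.
Qed.

Lemma unitary_l n (A : 'M[C]_n) : unitary A -> adj A *m A = 1%:M.
Proof. exact: mulmx1C. Qed.

Lemma nicemx_scale m n (c : C) (F : G -> 'M[C]_(m,n)) : nicemx F -> nicemx (fun g => c *: F g).
Proof.
move=> nF i j; apply: (@nice_ext _ _ (fun g => c * F g i j)).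
  by move=> g; rewrite mxE.
by apply: niceM => //; apply: nice_cst.
Qed.

Lemma nicemx_add m n (F H : G -> 'M[C]_(m,n)) : nicemx F -> nicemx H -> nicemx (fun g => F g + H g).
Proof.
move=> nF nH i j; apply: (@nice_ext _ _ (fun g => F g i j + H g i j)).
  by move=> g; rewrite mxE.
exact: niceD.
Qed.

Variables (dB dX : nat) (UB : G -> 'M[C]_dB) (UX : G -> 'M[C]_dX).
Hypotheses (hB : unitary_rep mul UB) (hX : unitary_rep mul UX).

Let W g := map_mx conjc (UB g) *t UX g.

Lemma W_unit g : W g *m adj (W g) = 1%:M /\ adj (W g) *m W g = 1%:M.
Proof.
have uB : unitary (UB g) by case: hB.
have uX : unitary (UX g) by case: hX.
have e : W g *m adj (W g) = 1%:M.
  rewrite /W adj_tens tensmx_mul.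
  by rewrite (conj_unitary uB) uX tens11.
by split => //; apply: mulmx1C.
Qed.

Lemma nW : nicemx W.
Proof.
apply: nicemx_tens; first by apply: nicemx_conj; apply: rep_nice hB.
exact: rep_nice hX.
Qed.

Lemma twirl_nice M : nicemx (fun g => W g *m M *m adj (W g)).
Proof.
apply: nicemx_mul; first by apply: nicemx_mul => //; [exact: nW|exact: nicemx_cst].
by apply: nicemx_adj; exact: nW.
Qed.

Lemma twirl_tr M : \tr (twirl mu (fun g => map_mx conjc (UB g)) UX M) = \tr M.
Proof.
rewrite /twirl mxint_tr; last exact: twirl_nice.
rewrite (cint_ext _ (fun g => _ : \tr (W g *m M *m adj (W g)) = \tr M)) ?cint_cst //.
by move=> g; rewrite mxtrace_mulC mulmxA (W_unit g).2 mul1mx.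
Qed.

Lemma twirl_psd M : psd M -> psd (twirl mu (fun g => map_mx conjc (UB g)) UX M).
Proof.
move=> hM; apply: mxint_psd; first exact: twirl_nice.
by move=> g; apply: psd_conj.
Qed.

Definition Tx (tau : 'M[C]_dX) := mxint mu (fun g => UX g *m tau *m adj (UX g)).

Lemma Tx_nice tau : nicemx (fun g => UX g *m tau *m adj (UX g)).
Proof.
apply: nicemx_mul; first by apply: nicemx_mul; [exact: rep_nice hX|exact: nicemx_cst].
by apply: nicemx_adj; exact: rep_nice hX.
Qed.

Lemma Tx_tr tau : \tr (Tx tau) = \tr tau.
Proof.
rewrite /Tx mxint_tr; last exact: Tx_nice.
rewrite (cint_ext _ (fun g => _ : \tr (UX g *m tau *m adj (UX g)) = \tr tau)) ?cint_cst //.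
move=> g; have uX : unitary (UX g) by case: hX.
by rewrite mxtrace_mulC mulmxA (unitary_l uX) mul1mx.
Qed.

Lemma Tx_psd tau : psd tau -> psd (Tx tau).
Proof.
move=> ht; apply: mxint_psd; first exact: Tx_nice.
by move=> g; apply: psd_conj.
Qed.

Lemma twirl_Lambda (p : R) (eta : 'M[C]_dB) (tau : 'M[C]_dX) :
  twirl mu (fun g => map_mx conjc (UB g)) UX (Lambda p eta *t tau) =
  (p%:C)%C *: twirl mu (fun g => map_mx conjc (UB g)) UX (eta *t tau) +
  (((1 - p) / dB%:R)%:C)%C *: (1%:M *t Tx tau).
Proof.
set c := (((1 - p) / dB%:R)%:C)%C.
rewrite /twirl /Lambda tensDl !tensZl -/c.
rewrite (@mxint_ext _ _ mu _ _ _ (fun g => (p%:C)%C *: (W g *m (eta *t tau) *m adj (W g)) +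
    c *: ((1%:M : 'M[C]_dB) *t (UX g *m tau *m adj (UX g))))); last first.
  move=> g; rewrite mulmxDr mulmxDl -!scalemxAr -!scalemxAl; congr (_ + _).
  congr (_ *: _); rewrite /W adj_tens !tensmx_mul mulmx1.
  have uB : unitary (UB g) by case: hB.
  by rewrite (conj_unitary uB).
rewrite mxintD; first last.
- by apply: nicemx_scale; apply: nicemx_tens; [exact: nicemx_cst|exact: Tx_nice].
- by apply: nicemx_scale; exact: twirl_nice.
rewrite mxintZ; last exact: twirl_nice.
rewrite mxintZ; last by apply: nicemx_tens; [exact: nicemx_cst|exact: Tx_nice].
by rewrite mxint_tens1 //; exact: Tx_nice.
Qed.
End Tw2.

Section Fin.
Variable R : realType.
Local Notation C := R[i].

Lemma psdZc n (c : C) (A : 'M[C]_n) : 0 <= c -> psd A -> psd (c *: A).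
Proof. by move=> c0 hA u; rewrite -scalemxAr -scalemxAl mxE mulr_ge0. Qed.

Definition Sset dR dX (Om : 'M[C]_(dR * dX)) : set R :=
  [set complex.Re (\tr Y) | Y in [set Y : 'M[C]_dX | psd Y /\ loewner_le Om ((1%:M : 'M[C]_dR) *t Y)]].

Lemma HminE dR dX (Om : 'M[C]_(dR * dX)) : Hmin Om = - (ln (inf (Sset Om)) / ln 2).
Proof. by []. Qed.

Lemma inf_affine (S : set R) (p c : R) : 0 < p -> S !=set0 -> has_lbound S ->
  inf [set p * s + c | s in S] = p * inf S + c.
Proof.
move=> p0 [s0 Ss0] [l hl].
have lS' : has_lbound [set p * s + c | s in S].
  exists (p * l + c) => _ [s Ss <-]; rewrite lerD2r ler_pM2l //; exact: hl.
have nS' : [set p * s + c | s in S] !=set0 by exists (p * s0 + c), s0.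
apply/eqP; rewrite eq_le; apply/andP; split.
  rewrite -lerBlDr -ler_pdivrMl //.
  apply: lb_le_inf; first by exists s0.
  move=> s Ss; rewrite ler_pdivrMl // lerBlDr.
  by apply: (ge_inf lS'); exists s.
apply: lb_le_inf => // _ [s Ss <-]; rewrite lerD2r ler_pM2l //.
by apply: ge_inf => //; exists l.
Qed.

Lemma Re_nat n : complex.Re (n%:R : C) = n%:R.
Proof. by elim: n => [|n IH] //; rewrite !mulrS ReD IH. Qed.
Lemma Im_nat n : complex.Im (n%:R : C) = 0.
Proof. by elim: n => [|n IH] //; rewrite !mulrS ImD IH addr0. Qed.

Lemma tens1_scalar m n (K : C) : (1%:M : 'M[C]_m) *t (K%:M : 'M[C]_n) = K%:M.
Proof.
have -> : (K%:M : 'M[C]_n) = K *: 1%:M by rewrite scalemx1.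
by rewrite tensZr tens11 scalemx1.
Qed.

Lemma S_props dR dX (Om : 'M[C]_(dR * dX)) : (0 < dR)%N -> psd Om -> \tr Om = 1 ->
  Sset Om !=set0 /\ (forall s, Sset Om s -> dR%:R^-1 <= s).
Proof.
move=> d0 hO tO; split.
  have [K [K0 hK]] := psd_bound hO.
  exists (complex.Re (\tr (K%:M : 'M[C]_dX))), K%:M => //; split.
    exact: psd_scalar.
  by rewrite /loewner_le tens1_scalar.
move=> _ [Y [pY hY] <-].
have := psd_tr hY; rewrite raddfB /= tr_tens mxtrace1 tO subr_ge0 lecE => /andP[_].
rewrite ReM Re_nat Im_nat mul0r subr0 => h.
by rewrite -[_^-1]mulr1 ler_pdivrMl // ltr0n.
Qed.
End Fin.

Section Fin2.
Variable R : realType.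
Local Notation C := R[i].

Lemma Re_lin (p cr : R) (z : C) : complex.Re ((p%:C)%C * z + (cr%:C)%C * 1) = p * complex.Re z + cr.
Proof. by case: z => a b /=; ring. Qed.

Lemma S_Lambda dR dX (Om : 'M[C]_(dR * dX)) (T : 'M[C]_dX) (p cr : R) :
  (0 < dR)%N -> 0 < p -> 0 <= cr -> psd Om -> psd T -> \tr T = 1 ->
  Sset ((p%:C)%C *: Om + (cr%:C)%C *: (1%:M *t T)) = [set p * s + cr | s in Sset Om].
Proof.
move=> d0 p0 c0 hO hT tT.
have pc : (p%:C)%C != 0 by rewrite eq_complex /= gt_eqF.
apply/seteqP; split.
- move=> _ [Y [pY hY] <-].
  set Y' := ((p%:C)%C)^-1 *: (Y - (cr%:C)%C *: T).
  have eY : Y = (p%:C)%C *: Y' + (cr%:C)%C *: T.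
    by apply/matrixP => i j; rewrite !mxE; field.
  have hY' : psd (1%:M *t Y' - Om).
    have -> : 1%:M *t Y' - Om = ((p%:C)%C)^-1 *:
        ((1%:M *t Y) - ((p%:C)%C *: Om + (cr%:C)%C *: (1%:M *t T))).
      by apply/matrixP => i j; rewrite !mxE; field.
    by apply: psdZc => //; rewrite invr_ge0 ler0c ltW.
  exists (complex.Re (\tr Y')).
    exists Y' => //; split => //.
    apply: (psd_tens1 d0); have := psdD hY' hO.
    by rewrite subrK.
  by rewrite [in RHS]eY mxtraceD !mxtraceZ tT Re_lin.
- move=> _ [s [Y' [pY' hY'] <-] <-].
  exists ((p%:C)%C *: Y' + (cr%:C)%C *: T).
    split; first by apply: psdD; apply: psdZ => //; apply: ltW.
    rewrite /loewner_le.
    have -> : 1%:M *t ((p%:C)%C *: Y' + (cr%:C)%C *: T) -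
        ((p%:C)%C *: Om + (cr%:C)%C *: (1%:M *t T)) = (p%:C)%C *: (1%:M *t Y' - Om).
      by apply/matrixP => i j; rewrite !mxE; ring.
    by apply: psdZ => //; apply: ltW.
  by rewrite mxtraceD !mxtraceZ tT Re_lin.
Qed.

Lemma ln_cmp (a b : R) : 0 < a -> 0 < b ->
  (0 <= - (ln a / ln 2) - - (ln b / ln 2)) <-> a <= b.
Proof.
move=> a0 b0; have l2 : 0 < ln (2 : R) by apply: ln_gt0; rewrite ltr1n.
rewrite opprK addrC subr_ge0 ler_pM2r ?invr_gt0 //.
by rewrite ler_ln ?posrE.
Qed.

Lemma main_X (G : ptopologicalType) (mul : G -> G -> G)
  (mu : probability (Borel G) R) (dB dX : nat) (UB : G -> 'M[C]_dB) (UX : G -> 'M[C]_dX)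
  (eta : 'M[C]_dB) (tau : 'M[C]_dX) (p : R) :
  (0 < dB)%N -> unitary_rep mul UB -> unitary_rep mul UX -> state eta -> state tau ->
  0 < p <= 1 ->
  exists q, 0 < q /\ Heta mu UB UX eta tau = - (ln q / ln 2) /\
    Heta mu UB UX (Lambda p eta) tau = - (ln (p * q + (1 - p) / dB%:R) / ln 2).
Proof.
move=> d0 hB hX [pe te] [pt tt] /andP[p0 p1].
set Om := twirl mu (fun g => map_mx conjc (UB g)) UX (eta *t tau).
have pO : psd Om := twirl_psd mu hB hX (psd_tens pe pt).
have tO : \tr Om = 1 by rewrite (twirl_tr mu hB hX) tr_tens te tt mulr1.
have [ne lb] := S_props d0 pO tO.
have cr0 : 0 <= (1 - p) / dB%:R by rewrite divr_ge0 ?subr_ge0.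
exists (inf (Sset Om)); split.
  apply: lt_le_trans (lb_le_inf ne lb); by rewrite invr_gt0 ltr0n.
split; first by [].
rewrite /Heta HminE (twirl_Lambda mu hB hX) -/Om S_Lambda //.
- rewrite inf_affine //; exists dB%:R^-1; exact: lb.
- exact: (Tx_psd mu hX).
- by rewrite (Tx_tr mu hX).
Qed.
End Fin2.

Unset Implicit Arguments.
Set Strict Implicit.

Theorem lemma11 (R : realType) (G : ptopologicalType)
  (mul : G -> G -> G) (inv : G -> G) (e : G)
  (mu : probability (g_sigma_algebraType (@open G)) R)
  (dA dB : nat) (UA : G -> 'M[R[i]]_dA) (UB : G -> 'M[R[i]]_dB)
  (rho : 'M[R[i]]_dA) (sigma eta : 'M[R[i]]_dB) (p : R) :
  compact_group mul inv e -> haar mul mu ->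
  unitary_rep mul UA -> unitary_rep mul UB ->
  state rho -> state sigma -> state eta ->
  0 < p <= 1 ->
  (0 <= DeltaH mu UA UB eta rho sigma <->
   0 <= DeltaH mu UA UB (Lambda p eta) rho sigma).
Proof.
move=> _ _ hA hB sr ss se hp.
have d0 : (0 < dB)%N.
  case: dB UB sigma eta hB ss se => [|n] //= _ _ eta' _ _ [_].
  by rewrite /mxtrace big_ord0 => /eqP; rewrite eq_sym oner_eq0.
have [qs [qs0 [Hs HsL]]] := main_X mu d0 hB hB se ss hp.
have [qr [qr0 [Hr HrL]]] := main_X mu d0 hB hA se sr hp.
case/andP: hp => p0 p1.
have cr0 : 0 <= (1 - p) / dB%:R by rewrite divr_ge0 ?subr_ge0.
have psL : 0 < p * qs + (1 - p) / dB%:R by rewrite ltr_wpDr // mulr_gt0.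
have prL : 0 < p * qr + (1 - p) / dB%:R by rewrite ltr_wpDr // mulr_gt0.
rewrite /DeltaH Hs Hr HsL HrL; split => h.
  apply/(ln_cmp psL prL); rewrite lerD2r ler_pM2l //.
  exact/(ln_cmp qs0 qr0).
apply/(ln_cmp qs0 qr0); move/(ln_cmp psL prL): h.
by rewrite lerD2r ler_pM2l.
Qed.
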